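(* Let $n,d,c\in\mathbb{N}$ with $d\ge 50$ and $1\le c\le d$, and let $\mathcal{F}\subseteq 2^{[n]}$ be a hereditary family with $\delta(\mathcal{F})\ge 2^{d-1}-c+1$. If $P\subseteq[n]$ is an isolated pile of $\mathcal{F}$, then $\sum_{x\in P}\omega_{\mathcal{F}}(x)\ge \mathfrak{B}_c\, d$.
   Context: A family $\mathcal{F}\subseteq 2^{[n]}$ is hereditary if $F'\subseteq F\in\mathcal{F}$ implies $F'\in\mathcal{F}$. $d_{\mathcal{F}}(x)=|\{F\in\mathcal{F}:x\in F\}|$, $\delta(\mathcal{F})=\min_x d_{\mathcal{F}}(x)$, $N(x)=\bigcup_{x\in F\in\mathcal{F}}F$. The weight of $x$ is $\omega_{\mathcal{F}}(x)=\sum_{x\in F\in\mathcal{F}}\frac{1}{|F|}$. For $1\le c\le d$, $\mathfrak{B}_c=\frac{2^d-c}{d}$ if $1\le c\le d-1$ and $\mathfrak{B}_d=\frac{2^d-d-\frac12}{d}$. A set $P\subseteq[n]$ with $|P|=d$ is a pile of $\mathcal{F}$ if $P\subseteq N(y)$ for every $y\in P$, and there exists $z\in P$ with $N(z)=P$. A pile is isolated if it is disjoint from every other pile of $\mathcal{F}$. *)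

(* Defs.v *)
From mathcomp Require Import all_boot all_order all_algebra.
Set Implicit Arguments. Unset Strict Implicit. Unset Printing Implicit Defensive.
Import Order.TTheory GRing.Theory Num.Theory.

Definition hereditary n (F : {set {set 'I_n}}) : Prop :=
  forall A B : {set 'I_n}, B \in F -> A \subset B -> A \in F.

Definition degF n (F : {set {set 'I_n}}) (x : 'I_n) : nat :=
  #|[set A in F | x \in A]|.

Definition nbhd n (F : {set {set 'I_n}}) (x : 'I_n) : {set 'I_n} :=
  \bigcup_(A in F | x \in A) A.

Definition weight n (F : {set {set 'I_n}}) (x : 'I_n) : rat :=
  (\sum_(A in F | x \in A) (#|A|%:R)^-1)%R.

Definition frakB (d c : nat) : rat :=
  (if (c < d)%N then ((2 ^ d)%:R - c%:R) / d%:R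
   else ((2 ^ d)%:R - d%:R - 2^-1) / d%:R)%R.

Definition is_pile n (F : {set {set 'I_n}}) (d : nat) (P : {set 'I_n}) : Prop :=
  #|P| = d /\ (forall y, y \in P -> P \subset nbhd F y) /\
  exists2 z, z \in P & nbhd F z = P.

Definition isolated_pile n (F : {set {set 'I_n}}) (d : nat) (P : {set 'I_n}) : Prop :=
  is_pile F d P /\
  forall Q, is_pile F d Q -> Q != P -> [disjoint Q & P].

(* Main.v *)
Require Import Defs.
From mathcomp Require Import all_boot all_order all_algebra.
From mathcomp Require Import zify ring lra.
Set Implicit Arguments. Unset Strict Implicit. Unset Printing Implicit Defensive.
Import Order.TTheory GRing.Theory Num.Theory.

Definition Out n (F : {set {set 'I_n}}) (P : {set 'I_n}) (y : 'I_n) :=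
  [set A in F | (y \in A) && ~~ (A \subset P)].
Definition Sy n (F : {set {set 'I_n}}) (P : {set 'I_n}) y : rat :=
  (\sum_(A in Out F P y) (#|A|%:R)^-1)%R.

Ltac bsolve := repeat match goal with
 | |- context [?x \in ?A] => case: (x \in A)
 | |- context [?A \subset ?B] => case: (A \subset B)
 | |- context [?a == ?b] => case: (a == b)
 end; done.

Lemma sum_lb (I : finType) (D : {set I}) (f : I -> rat) (b : rat) :
  (forall i, i \in D -> b <= f i)%R -> (#|D|%:R * b <= \sum_(i in D) f i)%R.
Proof.
move=> H; rewrite -sum1_card natr_sum mulr_suml.
by apply: ler_sum => i iD; rewrite mul1r; apply: H.
Qed.

Lemma sum_sub_le (I : finType) (A B : {set I}) (f : I -> rat) :
  A \subset B -> (forall i, i \in B -> 0 <= f i)%R ->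
  (\sum_(i in A) f i <= \sum_(i in B) f i)%R.
Proof.
move=> AB f0; rewrite [X in (_ <= X)%R](big_setID A) /= (setIidPr AB) lerDl.
by apply: sumr_ge0 => i; rewrite inE => /andP[_]; apply: f0.
Qed.

Lemma sub_size (T : finType) (A : {set T}) k : k <= #|A| ->
  exists2 B : {set T}, B \subset A & #|B| = k.
Proof.
move=> /card_geqP [s [us ss sA]].
exists [set x in s]; first by apply/subsetP => x; rewrite inE; apply: sA.
by rewrite cardsE (card_uniqP us).
Qed.

Lemma inv_card_ge0 n (A : {set 'I_n}) : (0 <= (#|A|%:R : rat)^-1)%R.
Proof. by rewrite invr_ge0 ler0n. Qed.

Lemma F1 n (F : {set {set 'I_n}}) (P : {set 'I_n}) (y : 'I_n) K :
  hereditary F -> y \in P -> (2 <= K)%N ->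
  ((minn #|Out F P y| (2^(K-2)))%:R / K%:R <= Sy F P y)%R.
Proof.
move=> hF yP K2.
have K0 : (0 < K%:R :> rat)%R by rewrite ltr0n; lia.
suff [D DO [DK DC]] : exists2 D : {set {set 'I_n}}, D \subset Out F P y &
    (forall A, A \in D -> #|A| <= K) /\ minn #|Out F P y| (2^(K-2)) <= #|D|.
  have h1 : ((minn #|Out F P y| (2^(K-2)))%:R / K%:R <= #|D|%:R / K%:R :> rat)%R.
    by rewrite ler_pM2r ?invr_gt0 // ler_nat.
  apply: le_trans h1 _.
  refine (le_trans _ (@sum_sub_le _ D _ (fun A => ((#|A|%:R : rat)^-1)%R) DO (fun A _ => inv_card_ge0 A))).
  apply: sum_lb => A AD.
  have : A \in Out F P y by apply: (subsetP DO).
  rewrite inE => /andP[_ /andP[yA _]].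
  have A0 : (0 < #|A|)%N by apply/card_gt0P; exists y.
  rewrite lef_pV2 ?posrE ?ltr0n //; last by lia.
  by rewrite ler_nat DK.
case: (boolP [forall A in Out F P y, #|A| <= K]) => [/forall_inP small | ].
  by exists (Out F P y) => //; split => //; apply: geq_minl.
move=> /forall_inPn [A AO]; rewrite -ltnNge => KA.
move: (AO); rewrite inE => /andP[AF /andP[yA /subsetPn [w wA wP]]].
have wy : w != y by apply: contraNneq wP => ->.
have : K - 2 <= #|A :\: [set y; w]|.
  rewrite cardsD (setIidPr _); last by apply/subsetP => x; rewrite !inE => /orP[]/eqP->.
  by rewrite cards2 eq_sym wy; lia.
move=> /sub_size [B BA cB].
pose Y := [set y; w].
pose D := [set C :|: Y | C in powerset B].
have BY : [disjoint B & Y].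
  by rewrite -setI_eq0; apply/eqP/setP => x; rewrite !inE; apply/negP => /andP[/(subsetP BA)]; rewrite !inE => /andP[/negPf -> _].
exists D; last split.
- apply/subsetP => C /imsetP [C' C'B ->]; rewrite powersetE in C'B.
  rewrite inE; apply/andP; split.
    apply: hF AF _; apply/subsetP => x; rewrite inE => /orP[/(subsetP C'B)/(subsetP BA)|]; rewrite ?inE.
      by case/andP.
    by case/orP => /eqP ->.
  apply/andP; split; first by rewrite !inE eqxx orbT.
  by apply/subsetPn; exists w => //; rewrite !inE eqxx !orbT.
- move=> C /imsetP [C' C'B ->]; rewrite powersetE in C'B.
  apply: leq_trans (leq_card_setU _ _) _ .
  have := subset_leq_card C'B; rewrite /Y cards2 eq_sym wy /= cB => h.
  by apply: (@leq_trans (K - 2 + 2)); [rewrite leq_add2r; exact: h | lia].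
- rewrite /D card_in_imset ?card_powerset ?cB ?geq_minr //.
  have e : forall C : {set 'I_n}, C \subset B -> (C :|: Y) :\: Y = C.
    move=> C CB; apply/setP => x; rewrite !inE.
    have := subsetP CB x; case: (x \in C) => [/(_ isT)/(subsetP BA)|_].
      by rewrite !inE; case: (x == y); case: (x == w).
    by rewrite /= andNb.
  move=> C1 C2; rewrite !powersetE => C1B C2B E.
  by rewrite -(e _ C1B) E e.
Qed.

Lemma inj_le (T T' : finType) (f : T -> T') (D : {set T}) (E : {set T'}) :
  {in D &, injective f} -> (forall x, x \in D -> f x \in E) -> #|D| <= #|E|.
Proof.
move=> inj fDE; rewrite -(card_in_imset inj); apply: subset_leq_card.
by apply/subsetP => _ /imsetP [x xD ->]; apply: fDE.
Qed.

Lemma card_split (T : finType) (X : {set T}) (p : pred T) :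
  #|[set x in X | p x]| + #|[set x in X | ~~ p x]| = #|X|.
Proof.
have -> : [set x in X | p x] = X :&: [set x | p x] by apply/setP => x; rewrite !inE.
have -> : [set x in X | ~~ p x] = X :\: [set x | p x] by apply/setP => x; rewrite !inE andbC.
exact: cardsID.
Qed.

Definition UU n (F : {set {set 'I_n}}) (P : {set 'I_n}) := [set S in powerset P | S \notin F].
Definition aa n (F : {set {set 'I_n}}) (P : {set 'I_n}) (y : 'I_n) := #|[set S in UU F P | y \notin S]|.

Lemma pow_y n (P : {set 'I_n}) y : y \in P ->
  #|[set S in powerset P | y \in S]| <= 2 ^ (#|P|.-1).
Proof.
move=> yP.
have -> : #|P|.-1 = #|P :\ y| by rewrite (cardsD1 y P) yP.
rewrite -card_powerset.
apply: (@inj_le _ _ (fun S => S :\ y)).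
  move=> S1 S2; rewrite !inE => /andP[_ y1] /andP[_ y2] E.
  by rewrite -(setD1K y1) E setD1K.
move=> S; rewrite !inE => /andP[SP _].
by rewrite setSD.
Qed.

Lemma deg_lemma n (F : {set {set 'I_n}}) (P : {set 'I_n}) y c :
  y \in P -> (2 ^ (#|P|.-1) - c + 1 <= degF F y) -> c <= 2 ^ (#|P|.-1) ->
  #|UU F P| + 1 <= c + aa F P y + #|Out F P y|.
Proof.
move=> yP hdeg hc.
have e1 : degF F y = #|[set A in F | (y \in A) && (A \subset P)]| + #|Out F P y|.
  rewrite /degF /Out -(card_split [set A in F | y \in A] (fun A => A \subset P)).
  by apply: f_equal2; apply: eq_card => A; rewrite !inE; case: (A \in F).
have e2 : #|[set A in F | (y \in A) && (A \subset P)]| + #|[set S in UU F P | y \in S]|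
    = #|[set S in powerset P | y \in S]|.
  rewrite -(card_split [set S in powerset P | y \in S] (fun S => S \in F)).
  apply: f_equal2; apply: eq_card => A; rewrite /UU !inE;
    by case: (A \in F); case: (y \in A); case: (A \subset P).
have e3 : #|[set S in UU F P | y \in S]| + aa F P y = #|UU F P|.
  by rewrite /aa card_split.
have := pow_y yP; move: (2 ^ _) hdeg hc => K hdeg hc h; move: e1 e2 e3 hdeg h; move: (degF F y) (aa F P y) => a b; lia.
Qed.

Lemma weight_decomp n (F : {set {set 'I_n}}) (P : {set 'I_n}) :
  (\sum_(x in P) weight F x =
   #|[set A in F | (A \subset P) && (A != set0)]|%:R + \sum_(x in P) Sy F P x)%R.
Proof.
have e1 : forall x, (weight F x = \sum_(A in F | (x \in A) && (A \subset P)) (#|A|%:R)^-1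
    + Sy F P x)%R.
  move=> x; rewrite /weight (bigID (fun A : {set 'I_n} => A \subset P)) /=; congr (_ + _)%R.
    by apply: eq_bigl => A; rewrite andbA.
  by rewrite /Sy /Out; apply: eq_bigl => A; rewrite !inE andbA.
rewrite (eq_bigr _ (fun x _ => e1 x)) big_split /=; congr (_ + _)%R.
rewrite (exchange_big_dep (fun A => (A \in F) && (A \subset P))) /=; last first.
  by move=> x A _ /andP[-> /andP[_ ->]].
rewrite -sum1_card natr_sum (bigID (fun A => A == set0)) /=.
rewrite [X in (X + _ = _)%R]big1 ?add0r; last first.
  move=> A /andP[_ /eqP ->]; apply: big_pred0 => x; by rewrite in_set0 !andbF.
apply: eq_big => [A | A]; first by rewrite !inE andbA.
move=> /andP[/andP[AF AP] A0].
rewrite (eq_bigl (fun x => x \in A)); last first.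
  move=> x; rewrite AF AP andbT /=; case xA: (x \in A); rewrite ?andbF //.
  by rewrite (subsetP AP x xA).
rewrite sumr_const -[LHS]mulr_natl mulfV // pnatr_eq0 -lt0n card_gt0 //.
Qed.
Lemma card_bigcup_le (I T : finType) (D : {set I}) (G : I -> {set T}) :
  #|\bigcup_(i in D) G i| <= \sum_(i in D) #|G i|.
Proof.
elim/big_rec2: _ => [|i A m _ IH]; first by rewrite cards0.
by apply: leq_trans (leq_card_setU _ _) _; rewrite leq_add2l.
Qed.

Lemma cardU_disj (T : finType) (A B : {set T}) :
  (forall x, x \in A -> x \notin B) -> #|A :|: B| = #|A| + #|B|.
Proof.
move=> H; rewrite cardsU.
have -> : A :&: B = set0.
  apply/setP => x; rewrite !inE; case xA: (x \in A) => //=; exact: negPf (H x xA).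
by rewrite cards0 subn0.
Qed.

Definition Uz n (F : {set {set 'I_n}}) (P : {set 'I_n}) z := [set S in UU F P | z \in S].
Definition U0 n (F : {set {set 'I_n}}) (P : {set 'I_n}) z := [set S in UU F P | z \notin S].
Definition az n (F : {set {set 'I_n}}) (P : {set 'I_n}) z y :=
  #|[set S in UU F P | (z \in S) && (y \notin S)]|.
Definition a0 n (F : {set {set 'I_n}}) (P : {set 'I_n}) z y :=
  #|[set S in UU F P | (z \notin S) && (y \notin S)]|.
Definition T2 n (F : {set {set 'I_n}}) (P : {set 'I_n}) z :=
  [set S in UU F P | (z \in S) && (#|P :\: S| == 2)].

Lemma notF_up n (F : {set {set 'I_n}}) (S S' : {set 'I_n}) :
  hereditary F -> S \subset S' -> S \notin F -> S' \notin F.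
Proof. by move=> hF SS; apply: contra => /hF; apply. Qed.

Lemma L1 n (F : {set {set 'I_n}}) (P : {set 'I_n}) z (R : pred {set 'I_n}) :
  hereditary F -> z \in P -> (forall S, R S -> R (S :|: [set z])) ->
  #|[set S in UU F P | (z \notin S) && R S]| <= #|[set S in UU F P | (z \in S) && R S]|.
Proof.
move=> hF zP HR.
apply: (@inj_le _ _ (fun S => S :|: [set z])).
  move=> S1 S2; rewrite !inE => /andP[_ /andP[z1 _]] /andP[_ /andP[z2 _]] E.
  apply/setP => x; move/setP: E => /(_ x); rewrite !inE.
  case: eqP => [-> | _]; last by rewrite !orbF.
  by rewrite (negPf z1) (negPf z2).
move=> S; rewrite /UU !inE => /andP[/andP[SP SF] /andP[zS RS]].
rewrite HR // eqxx orbT !andbT.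
apply/andP; split.
  by apply/subsetP => x; rewrite !inE => /orP[/(subsetP SP) // | /eqP ->].
by apply: (notF_up hF _ SF); apply: subsetUl.
Qed.

Lemma a_split n (F : {set {set 'I_n}}) (P : {set 'I_n}) z y :
  aa F P y = az F P z y + a0 F P z y.
Proof.
rewrite /aa /az /a0 -(card_split [set S in UU F P | y \notin S] (fun S => z \in S)).
by congr (_ + _); apply: eq_card => S; rewrite !inE; bsolve.
Qed.

Lemma U_split n (F : {set {set 'I_n}}) (P : {set 'I_n}) z :
  #|UU F P| = #|Uz F P z| + #|U0 F P z|.
Proof. by rewrite /Uz /U0 card_split. Qed.

Lemma a0_le n (F : {set {set 'I_n}}) (P : {set 'I_n}) z y :
  hereditary F -> z \in P -> y != z -> a0 F P z y <= az F P z y.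
Proof.
move=> hF zP yz; apply: L1 => // S; rewrite !inE negb_or => ->.
by rewrite yz.
Qed.

Lemma U0_le n (F : {set {set 'I_n}}) (P : {set 'I_n}) z :
  hereditary F -> z \in P -> #|U0 F P z| <= #|Uz F P z|.
Proof.
move=> hF zP; have := @L1 n F P z predT hF zP (fun _ _ => isT).
rewrite /U0 /Uz; congr (_ <= _); apply: eq_card => S; rewrite !inE; bsolve.
Qed.

Lemma setD_D1 n (P : {set 'I_n}) y : y \in P -> P :\: (P :\ y) = [set y].
Proof.
move=> yP; apply/setP => x; rewrite !inE.
by case: eqP => [-> | _]; rewrite ?yP //=; case: (x \in P).
Qed.

Lemma L2 n (F : {set {set 'I_n}}) (P : {set 'I_n}) z :
  hereditary F -> z \in P -> UU F P != set0 ->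
  #|[set y in P :\ z | 0 < aa F P y]| + #|T2 F P z| + 1 <= #|Uz F P z|.
Proof.
move=> hF zP /set0Pn [S0]; rewrite inE => /andP[]; rewrite powersetE => S0P S0F.
have PF : P \notin F by apply: notF_up hF S0P S0F.
set X := [set y in P :\ z | 0 < aa F P y].
set B := [set P :\ y | y in X].
have cB : #|B| = #|X|.
  apply: card_in_imset => y1 y2; rewrite !inE => /andP[/andP[_ y1P] _] /andP[/andP[_ y2P] _] E.
  apply/eqP; apply: contraT => ne.
  have : y1 \in P :\ y2 by rewrite !inE ne.
  by rewrite -E !inE eqxx.
have mB : forall S, S \in B -> #|P :\: S| = 1.
  move=> S /imsetP [y]; rewrite !inE => /andP[/andP[_ yP] _] ->.
  by rewrite setD_D1 // cards1.
have BU : B \subset Uz F P z.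
  apply/subsetP => S /imsetP [y]; rewrite !inE => /andP[/andP[yz yP] /card_gt0P [S1 S1in]] ->.
  move: S1in; rewrite !inE => /andP[/andP[S1P S1F] yS1].
  rewrite eq_sym yz zP subD1set /= andbT.
  apply: notF_up hF _ S1F; apply/subsetP => x xS1; rewrite !inE (subsetP S1P x xS1) andbT.
  by apply: contraNneq yS1 => <-.
have e : #|[set P] :|: B :|: T2 F P z| = 1 + #|B| + #|T2 F P z|.
  rewrite cardU_disj; first rewrite cardU_disj ?cards1 //.
    move=> x; rewrite inE => /eqP ->; apply/negP => /mB.
    by rewrite setDv cards0.
  move=> x; rewrite inE => /orP[|/mB]; rewrite /T2 !inE.
    by move/eqP ->; rewrite setDv cards0 /= !andbF.
  by move=> ->; rewrite /= !andbF.
have : [set P] :|: B :|: T2 F P z \subset Uz F P z.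
  rewrite !subUset BU andbT sub1set /Uz /UU !inE subxx PF zP /=.
  by apply/subsetP => S; rewrite /T2 !inE => /andP[-> /andP[-> _]].
move=> /subset_leq_card; rewrite e cB; lia.
Qed.

Lemma L3 n (F : {set {set 'I_n}}) (P : {set 'I_n}) z :
  hereditary F -> z \in P ->
  #|[set y in P :\ z | 1 < az F P z y]| <= 2 * #|T2 F P z|.
Proof.
move=> hF zP.
have sub : [set y in P :\ z | 1 < az F P z y] \subset \bigcup_(S in T2 F P z) (P :\: S).
  apply/subsetP => y; rewrite !inE => /andP[/andP[yz yP] /card_gt1P [S1 [S2 [S1in S2in ne]]]].
  have [S [Sin SD]] : exists S, S \in [set S in UU F P | (z \in S) && (y \notin S)] /\ S != P :\ y.
    case: (S1 =P P :\ y) => [e1 | ne1]; last by exists S1; split => //; apply/eqP.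
    by exists S2; split => //; rewrite -e1 eq_sym.
  move: Sin; rewrite !inE => /andP[/andP[SP SF] /andP[zS yS]].
  have [q qPS qy] : exists2 q, q \in P :\: S & q != y.
    apply/exists_inP; apply: contraNT SD => /exists_inPn H.
    apply/eqP/setP => x; rewrite !inE.
    case xS: (x \in S).
      by rewrite (subsetP SP x xS) andbT; symmetry; apply: contraNneq yS => <-.
    case: (x =P y) => [-> //| /eqP xy] /=.
    case xP: (x \in P) => //.
    by have := H x; rewrite !inE xS xP xy => /(_ isT).
  move: qPS; rewrite !inE => /andP[qS qP].
  apply/bigcupP; exists (P :\: [set y; q]).
    rewrite /T2 /UU !inE subsetDl /=.
    have -> : P :\: (P :\: [set y; q]) = [set y; q].
      apply/setP => x; rewrite !inE.
      case: (x =P y) => [-> | _]; first by rewrite yP.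
      case: (x =P q) => [-> | _]; first by rewrite qP orbT.
      by case: (x \in P).
    have c2 : #|[set y; q]| == 2 by rewrite cards2 (eq_sym y) qy.
    have zin : ~~ ((z == y) || (z == q)) && (z \in P).
      rewrite zP andbT; apply/negP => /orP[/eqP zy | /eqP zq].
        by rewrite zy eqxx in yz.
      by rewrite -zq zS in qS.
    rewrite c2 zin !andbT.
    rewrite /=; apply: notF_up hF _ SF.
    apply/subsetP => x xS; rewrite !inE (subsetP SP x xS) andbT.
    by apply/negP => /orP[/eqP e | /eqP e]; [rewrite -e xS in yS | rewrite -e xS in qS].
  by rewrite !inE eqxx yP.
apply: leq_trans (subset_leq_card sub) _.
apply: leq_trans (card_bigcup_le _ _) _.
rewrite mulnC -sum_nat_const; apply: leq_sum => S; rewrite /T2 !inE => /andP[_ /andP[_ /eqP ->]].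
by [].
Qed.

Lemma a0_witness n (F : {set {set 'I_n}}) (P : {set 'I_n}) z y (T : {set 'I_n}) :
  hereditary F -> 0 < a0 F P z y -> T \subset P -> z \notin T -> y \notin T ->
  (forall x, x \in P -> x != z -> x != y -> x \in T) -> T \notin F.
Proof.
move=> hF /card_gt0P [S]; rewrite !inE => /andP[/andP[SP SF] /andP[zS yS]] TP zT yT H.
apply: notF_up hF _ SF; apply/subsetP => x xS.
apply: H; first exact: (subsetP SP).
  by apply: contraNneq zS => <-.
by apply: contraNneq yS => <-.
Qed.

Lemma L5 n (F : {set {set 'I_n}}) (P : {set 'I_n}) z :
  hereditary F -> z \in P ->
  0 < #|[set y in P :\ z | 0 < a0 F P z y]| ->
  #|[set y in P :\ z | 0 < a0 F P z y]| < #|U0 F P z|.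
Proof.
move=> hF zP /card_gt0P [y0]; rewrite !inE => /andP[/andP[y0z y0P] ay0].
have PzU : P :\ z \in U0 F P z.
  rewrite /U0 /UU !inE subD1set eqxx /= andbT.
  have : P :\: [set z; y0] \notin F.
    apply: (a0_witness hF ay0); rewrite ?subsetDl ?inE ?eqxx ?orbT //=.
    by move=> x xP xz xy; rewrite !inE xP (negPf xz) (negPf xy).
  apply: notF_up hF _; apply/subsetP => x; rewrite !inE.
  by case: (x == z); case: (x == y0).
rewrite (cardsD1 (P :\ z)) PzU add1n ltnS.
apply: (@inj_le _ _ (fun y => P :\: [set z; y])).
  move=> y1 y2; rewrite !inE => /andP[/andP[y1z y1P] _] /andP[/andP[y2z y2P] _] E.
  apply/eqP; apply: contraT => ne.
  have : y1 \in P :\: [set z; y2] by rewrite !inE y1P (negPf y1z) (negPf ne).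
  by rewrite -E !inE eqxx orbT.
move=> y; rewrite !inE => /andP[/andP[yz yP] ay].
apply/andP; split.
  apply/negP => /eqP /setP /(_ y); rewrite !inE yP yz eqxx orbT.
  by [].
rewrite subsetDl eqxx /= andbT.
apply: (a0_witness hF ay); rewrite ?subsetDl ?inE ?eqxx ?orbT //=.
by move=> x xP xz xy; rewrite !inE xP (negPf xz) (negPf xy).
Qed.

Lemma pow_lb k : 11 <= k -> 4 * k + 9 <= 2 ^ k.
Proof.
elim: k => // k IH; rewrite leq_eqVlt => /orP[/eqP <- // | ].
rewrite ltnS => hk; have h := IH hk; rewrite expnS.
have : 2 ^ 2 <= 2 ^ k by rewrite leq_exp2l //; lia.
move: (2 ^ k) h => m; lia.
Qed.

Lemma K0_facts d : 50 <= d ->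
  d <= 2 ^ (trunc_log 2 d + 3 - 2) /\ 4 * (trunc_log 2 d + 3) <= d + 3.
Proof.
move=> hd; have d0 : 0 < d by apply: leq_trans hd.
have h1 := trunc_log_ltn d (isT : 1 < 2).
have h2 := trunc_logP (isT : 1 < 2) d0.
move: h1 h2; move: (trunc_log 2 d) => k h1 h2.
have -> : k + 3 - 2 = k.+1 by rewrite addnS addnC.
split; first exact: ltnW.
case: (leqP k 10) => hk.
  by clear h1 h2; lia.
have := pow_lb hk; move: h2; clear h1; move: (2 ^ k) => m h2 h3; lia.
Qed.

Lemma Sy_ge0 n (F : {set {set 'I_n}}) P y : (0 <= Sy F P y)%R.
Proof. by apply: sumr_ge0 => A _; apply: inv_card_ge0. Qed.

Lemma lb_sum n (F : {set {set 'I_n}}) (P Q D : {set 'I_n}) (b : rat) :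
  Q \subset D -> (forall y, y \in Q -> b <= Sy F P y)%R ->
  (#|Q|%:R * b <= \sum_(y in D) Sy F P y)%R.
Proof.
move=> QD H; apply: le_trans (sum_lb H) _.
by apply: sum_sub_le => // y _; apply: Sy_ge0.
Qed.

Lemma div_bound (q m K b : nat) (x : rat) : 0 < K -> K * b <= q * m ->
  (q%:R * (m%:R / K%:R) <= x)%R -> (b%:R <= x)%R.
Proof.
move=> K0 hb; apply: le_trans.
rewrite mulrA -natrM ler_pdivlMr ?ltr0n // -natrM ler_nat mulnC.
done.
Qed.

Lemma B1 n (F : {set {set 'I_n}}) (P : {set 'I_n}) y :
  hereditary F -> y \in P -> 0 < #|Out F P y| -> (2^-1 <= Sy F P y)%R.
Proof.
move=> hF yP o1; have := F1 hF yP (leqnn 2).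
by rewrite subnn expn0 (_ : minn _ 1 = 1) //; apply/minn_idPr.
Qed.

Lemma B2 n (F : {set {set 'I_n}}) (P : {set 'I_n}) y K m :
  hereditary F -> y \in P -> 2 <= K -> m <= #|Out F P y| -> m <= 2 ^ (K - 2) ->
  (m%:R / K%:R <= Sy F P y)%R.
Proof.
move=> hF yP K2 h1 h2; apply: le_trans (F1 hF yP K2).
rewrite ler_pM2r ?invr_gt0 ?ltr0n; last by apply: leq_trans K2.
by rewrite ler_nat leq_min h1 h2.
Qed.

Lemma main_comb n (F : {set {set 'I_n}}) (P : {set 'I_n}) z d c :
  hereditary F -> z \in P -> #|P| = d -> 50 <= d -> 1 <= c -> c <= d ->
  (forall y, y \in P -> #|UU F P| + 1 <= c + aa F P y + #|Out F P y|) ->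
  #|Out F P z| = 0 ->
  ((if (c < d)%N then (#|UU F P| + 1 - c)%:R else (#|UU F P| + 1 - c)%:R - 2^-1)
     <= \sum_(y in P :\ z) Sy F P y)%R.
Proof.
move=> hF zP cP d50 c1 cd hdeg oz.
have R0 : (0 <= \sum_(y in P :\ z) Sy F P y :> rat)%R.
  by apply: sumr_ge0 => y _; apply: Sy_ge0.
move: R0; set R := (\sum_(y in P :\ z) Sy F P y)%R => R0.
have hU := U_split F P z.
have hu0 := U0_le hF zP.
have hz := hdeg z zP; rewrite oz (_ : aa F P z = #|U0 F P z|) // in hz.
have [hK1 hK2] := K0_facts d50.
move: hK1 hK2; set K0 := trunc_log 2 d + 3 => hK1 hK2.
have K2 : 2 <= K0 by rewrite /K0 addnC.
have B2' : forall y m, y \in P -> m <= #|Out F P y| -> m <= d ->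
    (m%:R / K0%:R <= Sy F P y)%R.
  move=> y m yP h1 h2; apply: B2 => //; exact: leq_trans h2 hK1.
clear hK1.
have cPz : #|P :\ z| = d - 1 by move: (cardsD1 z P); rewrite zP cP; lia.
case: (leqP (#|UU F P| + 1 - c) 0) => ht.
  have -> : #|UU F P| + 1 - c = 0 by lia.
  case: ifP => _; first by [].
  by apply: le_trans R0; rewrite sub0r oppr_le0 invr_ge0 ler0n.
have UUne : UU F P != set0 by rewrite -card_gt0; lia.
have hL2 := L2 hF zP UUne.
have hL3 := L3 hF zP.
set X := [set y in P :\ z | 0 < aa F P y] in hL2.
set L := [set y in P :\ z | ~~ (0 < aa F P y)].
have cL : #|X| + #|L| = d - 1 by rewrite /X /L card_split cPz.
set Y2 := [set y in P :\ z | 1 < az F P z y] in hL3.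
set Q2 := [set y in P :\ z | ~~ (1 < az F P z y)].
have cQ2 : #|Y2| + #|Q2| = d - 1 by rewrite /Y2 /Q2 card_split cPz.
have hy : forall y, y \in P :\ z ->
    #|UU F P| + 1 <= c + aa F P y + #|Out F P y| /\ aa F P y <= 2 * az F P z y.
  move=> y; rewrite !inE => /andP[yz yP]; split; first exact: hdeg.
  by rewrite (a_split F P z) mul2n -addnn leq_add2l (a0_le hF zP yz).
set t := #|UU F P| + 1 - c.
have hLo : forall y, y \in L -> t <= #|Out F P y|.
  move=> y yL; have yPz : y \in P :\ z by move: yL; rewrite inE => /andP[].
  have [h1 _] := hy y yPz; move: yL; rewrite inE => /andP[_]; rewrite -eqn0Ngt => /eqP a0.
  rewrite /t; lia.
have LPz : L \subset P :\ z by apply/subsetP => y; rewrite inE => /andP[].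
have Q2Pz : Q2 \subset P :\ z by apply/subsetP => y; rewrite inE => /andP[].
have tle : t <= d - 1 by rewrite /t; lia.
have yPz_P : forall y, y \in P :\ z -> y \in P by move=> y; rewrite inE => /andP[].
have Rt : (t%:R <= R)%R -> ((if (c < d)%N then t%:R else t%:R - 2^-1) <= R)%R.
  move=> h; case: ifP => // _; apply: le_trans h; rewrite lerBlDr lerDl invr_ge0 ler0n //.
case: (ltnP t 2) => t1.
  have -> : t = 1 by lia.
  have := @lb_sum n F P L (P :\ z) (2^-1) LPz (fun y yL => B1 hF (yPz_P y (subsetP LPz y yL))
     (leq_trans ht (hLo y yL))).
  rewrite -/R; case: ifP => hcd hh.
    have : 2 <= #|L| by rewrite /t in ht; lia.
    rewrite -(ler_nat rat) => h2; lra.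
  have : 1 <= #|L| by rewrite /t in ht; lia.
  rewrite -(ler_nat rat) => h2; lra.
apply: Rt.
case: (ltnP t 3) => t2.
  have t2e : t = 2 by lia.
  rewrite t2e.
  set Q1 := [set y in P :\ z | aa F P y <= 1].
  set Big := [set y in P :\ z | ~~ (aa F P y <= 1)].
  have cQ1 : #|Q1| + #|Big| = d - 1 by rewrite /Q1 /Big card_split cPz.
  set Y0 := [set y in P :\ z | 0 < a0 F P z y].
  have hL5 := L5 hF zP; rewrite -/Y0 in hL5.
  have BigS : Big \subset Y2 :|: Y0.
    apply/subsetP => y; rewrite !inE -ltnNge => /andP[/andP[yz yP] ay].
    rewrite yz yP /=.
    have := a_split F P z y; have := a0_le hF zP yz.
    case: (ltnP 1 (az F P z y)) => h1 //.
    by move=> h2 h3; rewrite /=; lia.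
  have cBig : #|Big| <= #|Y2| + #|Y0|.
    by apply: leq_trans (subset_leq_card BigS) (leq_card_setU _ _).
  have LQ1 : #|L| <= #|Q1|.
    apply: subset_leq_card; apply/subsetP => y; rewrite !inE -eqn0Ngt.
    by move=> /andP[-> /eqP ->].
  have Q1Pz : Q1 \subset P :\ z by apply/subsetP => y; rewrite inE => /andP[].
  have := @lb_sum n F P Q1 (P :\ z) (2^-1) Q1Pz.
  have Q4 : 4 <= #|Q1|.
    case: (posnP #|Y0|) => hY0; first by lia.
    have := hL5 hY0; lia.
  rewrite -/R -(ler_nat rat) in Q4 => hh.
  have : (#|Q1|%:R * 2^-1 <= R)%R.
    apply: hh => y yQ; apply: B1 hF (yPz_P y (subsetP Q1Pz y yQ)) _.
    have [h1 _] := hy y (subsetP Q1Pz y yQ).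
    move: yQ; rewrite inE => /andP[_ ha]; move: h1 t2e; rewrite /t; lia.
  lra.
have K3 : 3 <= K0 by rewrite /K0 leq_addl.
case: (leqP K0 #|L|) => hLK.
  have hh := @lb_sum n F P L (P :\ z) (t%:R / K0%:R) LPz
    (fun y yL => B2' y t (yPz_P y (subsetP LPz y yL)) (hLo y yL) (leq_trans tle (leq_subr 1 d))).
  apply: (div_bound (q := #|L|) (m := t) (K := K0)) => //; first by lia.
  by rewrite leq_mul2r hLK orbT.
have hQ2 : 2 * K0 <= #|Q2| by move: hz hU hL2 hL3 cL cQ2; rewrite -/t; lia.
have hQo : forall y, y \in Q2 -> t - 2 <= #|Out F P y|.
  move=> y yQ; have [h1 h2] := hy y (subsetP Q2Pz y yQ).
  move: yQ; rewrite inE => /andP[_]; rewrite -leqNgt => ha.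
  move: h1; rewrite -/t; lia.
case: (ltnP t 4) => t3.
  have t3e : t = 3 by lia.
  have hh := @lb_sum n F P Q2 (P :\ z) (2^-1) Q2Pz
    (fun y yQ => B1 hF (yPz_P y (subsetP Q2Pz y yQ)) (leq_trans (_ : 0 < t - 2) (hQo y yQ))).
  have : (6 <= #|Q2|%:R :> rat)%R by rewrite ler_nat; lia.
  rewrite t3e; move: hh; rewrite -/R t3e => hh h6.
  have := hh isT; lra.
have hh := @lb_sum n F P Q2 (P :\ z) ((t - 2)%:R / K0%:R) Q2Pz
  (fun y yQ => B2' y (t - 2) (yPz_P y (subsetP Q2Pz y yQ)) (hQo y yQ) (leq_trans (leq_subr 2 t) (leq_trans tle (leq_subr 1 d)))).
apply: (div_bound (q := #|Q2|) (m := t - 2) (K := K0)) => //; first by lia.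
nia.
Qed.
Theorem mainTheorem14 (n d c : nat) (F : {set {set 'I_n}}) (P : {set 'I_n}) :
  (50 <= d)%N -> (1 <= c <= d)%N ->
  hereditary F ->
  (forall x : 'I_n, (2 ^ d.-1 - c + 1 <= degF F x)%N) ->
  isolated_pile F d P ->
  (frakB d c * d%:R <= \sum_(x in P) weight F x)%R.
Proof.
move=> d50 /andP[c1 cd] hF hdeg [[cP [_ [z zP nz]]] _].
have oz : #|Out F P z| = 0.
  apply/eqP; rewrite cards_eq0; apply/eqP/setP => A; rewrite !inE.
  case AF: (A \in F) => //=; case zA: (z \in A) => //=.
  rewrite -nz; apply/negbF.
  by apply: (bigcup_sup A); rewrite AF zA.
have c2 : c <= 2 ^ (#|P|.-1).
  rewrite cP; apply: leq_trans cd _.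
  have := ltn_expl d.-1 (isT : 1 < 2); move: (2 ^ d.-1) => m; lia.
have hd : forall y, y \in P -> #|UU F P| + 1 <= c + aa F P y + #|Out F P y|.
  by move=> y yP; apply: deg_lemma => //; rewrite cP; apply: hdeg.
have hmc := main_comb hF zP cP d50 c1 cd hd oz.
have set0F : set0 \in F.
  have := hdeg z; move: (2 ^ d.-1) => m hm.
  have : 0 < degF F z by lia.
  rewrite /degF => /card_gt0P [A]; rewrite inE => /andP[AF _].
  by apply: hF AF _; apply: sub0set.
have cN : #|[set A in F | (A \subset P) && (A != set0)]| + 1 + #|UU F P| = 2 ^ d.
  rewrite -cP -card_powerset -(card_split (powerset P) (fun S => S \in F)).
  have -> : #|[set x in powerset P | x \in F]| = #|[set A in F | A \subset P]|.
    by apply: eq_card => A; rewrite !inE; bsolve.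
  congr (_ + _); rewrite [RHS](cardsD1 set0) !inE set0F sub0set add1n addn1.
  by apply: congr1; apply: eq_card => A; rewrite !inE; bsolve.
rewrite weight_decomp.
have hsub : (\sum_(y in P :\ z) Sy F P y <= \sum_(x in P) Sy F P x)%R.
  by apply: sum_sub_le; [apply: subD1set | move=> y _; apply: Sy_ge0].
move: hmc hsub cN; set R := (\sum_(y in P :\ z) Sy F P y)%R.
set R' := (\sum_(x in P) Sy F P x)%R.
set N := #|[set A in F | (A \subset P) && (A != set0)]|.
set U := #|UU F P|.
move=> hmc hsub cN.
have cNr : (N%:R + 1 + U%:R = (2 ^ d)%:R :> rat)%R by rewrite -cN !natrD.
have ht : (U%:R + 1 - c%:R <= (U + 1 - c)%:R :> rat)%R.
  case: (leqP c (U + 1)) => h.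
    by rewrite natrB // natrD.
  have -> : U + 1 - c = 0 by lia.
  have h2 : U + 1 <= c by lia.
  by move: h2; rewrite -(ler_nat rat) natrD => h2; lra.
have d0 : (d%:R != 0 :> rat)%R by rewrite pnatr_eq0; lia.
rewrite /frakB; case: ifP => hcd; rewrite hcd in hmc; rewrite mulfVK //.
  move: cNr ht hmc hsub; move: ((2 ^ d)%:R : rat) ((U + 1 - c)%:R : rat) (N%:R : rat) (U%:R : rat) (c%:R : rat) => a b e f g.
  move=> *; lra.
have cde : c = d by apply/eqP; rewrite eqn_leq cd leqNgt hcd.
have cdr : (c%:R = d%:R :> rat)%R by rewrite cde.
move: cdr cNr ht hmc hsub; move: ((2 ^ d)%:R : rat) ((U + 1 - c)%:R : rat) (N%:R : rat) (U%:R : rat) (c%:R : rat) (d%:R : rat) => a b e f g h.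
move=> *; lra.
Qed.
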